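(* Let $W, W' \in \mathcal{D}_1$ with $W = LW'R$ and $W = \begin{pmatrix} a & b \\ c & d\end{pmatrix}$. Then \[ \sigma(W) = 2\left\lfloor \frac{\xi(a,c)}{2}\right\rfloor + 2. \]
   Context: $L = \begin{pmatrix} 1 & 0 \\ 1 & 1\end{pmatrix}$, $R = \begin{pmatrix} 1 & 1 \\ 0 & 1\end{pmatrix}$. $\mathcal{D}_1$ is the set of $2\times 2$ nonnegative integer matrices of determinant $1$; the map sending a word over $\{L,R\}$ to the product of the corresponding matrices is an isomorphism of $\{L,R\}^*$ onto $\mathcal{D}_1$, so elements of $\mathcal{D}_1$ are identified with words over $\{L,R\}$. For a finite word $V$, a run is a maximal block of consecutive equal letters, and $\sigma(V)$ is the number of runs of $V$ (e.g. $\sigma(LLRRRRL)=3$). For nonnegative integers $a,c$ not both zero, $\xi(a,c)$ is the number of divisions performed by the Euclidean algorithm computing $\gcd(a,c)$ (ending when $0$ is reached), e.g. $\xi(7,0)=0$, $\xi(7,1)=\xi(1,7)=1$, $\xi(13,5)=4$. *)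

(* Defs.v *)
From HB Require Import structures.
From mathcomp Require Import all_boot all_order all_algebra.
Set Implicit Arguments. Unset Strict Implicit. Unset Printing Implicit Defensive.
Import GRing.Theory.
Local Open Scope ring_scope.

Inductive letter := Lt | Rt.

Definition letter_eqb (x y : letter) : bool :=
  match x, y with Lt, Lt | Rt, Rt => true | _, _ => false end.
Lemma letter_eqP : Equality.axiom letter_eqb.
Proof. by case; case; constructor. Qed.
HB.instance Definition _ := hasDecEq.Build letter letter_eqP.

(* L = [[1,0],[1,1]], R = [[1,1],[0,1]] as 2x2 matrices over nat. *)
Definition Lmx : 'M[nat]_2 := \matrix_(i < 2, j < 2) (if (i == 0%N :> nat) && (j == 1%N :> nat) then 0%N else 1%N).
Definition Rmx : 'M[nat]_2 := \matrix_(i < 2, j < 2) (if (i == 1%N :> nat) && (j == 0%N :> nat) then 0%N else 1%N).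

Definition letter_mx (x : letter) : 'M[nat]_2 := if x is Lt then Lmx else Rmx.

(* The element of D_1 corresponding to a word: product of the letters. *)
Definition word_mx (w : seq letter) : 'M[nat]_2 :=
  foldr (fun x M => letter_mx x *m M) 1%:M w.

(* sigma(V): number of runs (maximal blocks of equal consecutive letters). *)
Fixpoint sigma (w : seq letter) : nat :=
  match w with
  | [::] => 0%N
  | x :: t => match t with
              | [::] => 1%N
              | y :: _ => (sigma t + (x != y))%N
              end
  end.

Fixpoint xi_fuel (n a c : nat) : nat :=
  match n with
  | 0 => 0%N
  | n'.+1 => if (a == 0%N) || (c == 0%N) then 0%N
             else (xi_fuel n' (minn a c) (maxn a c %% minn a c)).+1
  end.
Definition xi (a c : nat) : nat := xi_fuel (a + c) a c.

Example xi_ex1 : xi 7 0 = 0%N. Proof. by []. Qed.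
Example xi_ex2 : xi 7 1 = 1%N /\ xi 1 7 = 1%N. Proof. by []. Qed.
Example xi_ex3 : xi 13 5 = 4%N. Proof. by []. Qed.
Example sigma_ex : sigma [:: Lt; Lt; Rt; Rt; Rt; Rt; Lt] = 3%N. Proof. by []. Qed.
Example mx_ex : word_mx [:: Lt; Rt] = Lmx *m Rmx. Proof. by rewrite /word_mx /= mulmx1. Qed.

(* Main.v *)
Require Import Defs.
From mathcomp Require Import all_boot all_order all_algebra.
From mathcomp Require Import zify.

Definition x0 w := word_mx w ord0 ord0.
Definition y0 w := word_mx w (@inord 1 1) ord0.

Lemma lift01 : (lift ord0 ord0 : 'I_2) = inord 1.
Proof. by apply: val_inj; rewrite /= inordK. Qed.

Lemma col_cons a w :
  (x0 (a :: w) = if a is Rt then x0 w + y0 w else x0 w)%N /\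
  (y0 (a :: w) = if a is Lt then x0 w + y0 w else y0 w)%N.
Proof.
rewrite /x0 /y0 /= !mxE !big_ord_recl !big_ord0 /=.
case: a; rewrite /= !mxE /= inordK //; split; 
  rewrite /= ?mul1r ?mul0r ?addr0 ?add0r lift01 //.
all: rewrite /GRing.mul /GRing.add /= ; lia.
Qed.

Lemma col_base : x0 [:: Rt] = 1%N /\ y0 [:: Rt] = 0%N.
Proof.
by rewrite /x0 /y0 /word_mx /= mulmx1 !mxE /= inordK.
Qed.

Lemma xi_fuel_eq n m a c : (a + c <= n)%N -> (a + c <= m)%N ->
  xi_fuel n a c = xi_fuel m a c.
Proof.
elim: n m a c => [|n IH] [|m] a c /= Hn Hm //.
- have -> : a = 0%N by lia. by [].
- have -> : a = 0%N by lia. by [].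
- case: ifP => // /norP [Ha Hc]. congr S; apply: IH.
  + have h1 : (maxn a c %% minn a c < minn a c)%N by apply: ltn_pmod; lia.
    lia.
  + have h1 : (maxn a c %% minn a c < minn a c)%N by apply: ltn_pmod; lia.
    lia.
Qed.

Lemma xi_step a c : (0 < a)%N -> (0 < c)%N ->
  xi a c = (xi (minn a c) (maxn a c %% minn a c)).+1.
Proof.
move=> Ha Hc; rewrite /xi.
have -> : (a + c = (a + c).-1.+1)%N by lia.
rewrite /=. have -> : (a == 0%N) || (c == 0%N) = false by lia.
congr S; apply: xi_fuel_eq => //.
have h1 : (maxn a c %% minn a c < minn a c)%N by apply: ltn_pmod; lia.
lia.
Qed.

Lemma xi_sym a c : xi a c = xi c a.
Proof.
case: a => [|a]; case: c => [|c] //.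
- by rewrite xi_step // [in RHS]xi_step // minnC maxnC.
Qed.

Lemma xi_same x y : (0 < x <= y)%N -> xi x (x + y) = xi x y.
Proof.
move=> H. rewrite xi_step; try lia. rewrite [RHS]xi_step; try lia.
have -> : minn x (x + y) = x by lia.
have -> : maxn x (x + y) = (x + y)%N by lia.
have -> : minn x y = x by lia.
have -> : maxn x y = y by lia.
by rewrite modnDl.
Qed.

Lemma xi_diff x y : (0 < y < x)%N -> xi x (x + y) = (xi x y).+1.
Proof.
move=> H. rewrite xi_step; try lia.
have -> : minn x (x + y) = x by lia.
have -> : maxn x (x + y) = (x + y)%N by lia.
by rewrite modnDl modn_small //; lia.
Qed.

Definition strict (l : letter) x y := if l is Lt then (0 < x < y)%N else (0 < y < x)%N.

Definition Inv w := odd (sigma w) = (head Rt w == Rt) /\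
  [\/ (x0 w = 1 /\ y0 w = 0 /\ head Rt w = Rt /\ sigma w = 1)%N,
      (x0 w = 1 /\ y0 w = 1 /\ head Rt w = Lt /\ sigma w = 2)%N |
      strict (head Rt w) (x0 w) (y0 w) /\
      (xi (x0 w) (y0 w) + 1 = sigma w \/ xi (x0 w) (y0 w) + 2 = sigma w)%N].

Lemma xi_sameR x y : (0 < y <= x)%N -> xi (x + y) y = xi x y.
Proof. by move=> H; rewrite xi_sym addnC xi_same // xi_sym. Qed.

Lemma xi_diffR x y : (0 < x < y)%N -> xi (x + y) y = (xi x y).+1.
Proof. by move=> H; rewrite xi_sym addnC xi_diff // xi_sym. Qed.

Lemma Inv_step a b t : Inv (b :: t) -> Inv (a :: b :: t).
Proof.
rewrite /Inv.
have [-> ->] := col_cons a (b :: t).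
have -> : sigma [:: a, b & t] = (sigma (b :: t) + (a != b))%N by [].
move: (x0 (b :: t)) (y0 (b :: t)) (sigma (b :: t)) => X Y s [Hp Hc].
rewrite [head _ _]/= in Hp Hc *.
case: a; case: b Hp Hc => /= Hp Hc; case: Hc => [[H1 [H2 [H3 H4]]]|[H1 [H2 [H3 H4]]]|[H1 H2]] //; subst.
all: rewrite ?addn0 ?addn1 /= ?Hp //; split => //.
all: try (by apply: Or33; split; [lia| rewrite xi_same; lia]).
all: try (by apply: Or33; split; [lia| rewrite xi_sameR; lia]).
all: try (by apply: Or33; split; [lia| rewrite xi_diff; lia]).
all: try (by apply: Or33; split; [lia| rewrite xi_diffR; lia]).
- by apply: Or32.
- by apply: Or33; split => //; right.
- by apply: Or31.
Qed.

Lemma Inv_all u : Inv (rcons u Rt).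
Proof.
elim: u => [|a u IH].
  by rewrite /Inv /=; split => //; apply: Or31; have [-> ->] := col_base.
rewrite rcons_cons; move: IH; case E: (rcons u Rt) => [|b t].
  by case: u E.
exact: Inv_step.
Qed.

Theorem lemma12 (W' : seq letter) :
  let W := Lt :: rcons W' Rt in
  sigma W = (2 * ((xi (word_mx W ord0 ord0) (word_mx W (@inord 1 1) ord0)) %/ 2) + 2)%N.
Proof.
move=> W.
have := Inv_all (Lt :: W'); rewrite rcons_cons -/W /Inv -/(x0 W) -/(y0 W) /=.
move=> [Hp Hc].
have Hm : (sigma W %% 2 = 0)%N by rewrite modn2 Hp.
case: Hc => [[H1 [H2 [H3 H4]]]|[H1 [H2 [H3 H4]]]|[H1 H2]] //.
- by rewrite H1 H2 H4.
- lia.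
Qed.
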